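(* Consider the problem $\min_{x\in\mathbb{R}^n} f(x):=F(x)+h(x)$, where $h:\mathbb{R}^n\to\mathbb{R}\cup\{+\infty\}$ is a proper closed convex function, $F:\mathbb{R}^n\to\mathbb{R}$ is lower semicontinuous (possibly nonconvex), $\mathrm{dom}\, f=\mathrm{dom}\, h$, and there is $f_\infty>-\infty$ with $f(x)\ge f_\infty$ for all $x\in\mathrm{dom}\, f$. Fix $q\in[0,2)$ and $\rho>0$. Let $x_0\in\mathrm{dom}\, h$ and let the sequence $(x_k)_{k\ge0}$ be generated by $$x_{k+1}=\mathrm{prox}_{\alpha_k h}\big(x_k-\alpha_k g_k\big),\qquad \mathrm{prox}_{\gamma h}(z):=\arg\min_{y\in\mathrm{dom}\, h}\Big\{h(y)+\tfrac{1}{2\gamma}\|z-y\|^2\Big\},$$ where at each iteration $k$ the vector $g_k$ and numbers $\delta_k\ge 0$, $L_k>0$ satisfy $$F(x)-\big(F(x_k)+\langle g_k,x-x_k\rangle\big)\le \frac{L_k}{2}\|x-x_k\|^2+\delta_k\|x-x_k\|^q\quad\text{for all } x\in\mathrm{dom}\, f,$$ and the step sizes satisfy $0<\alpha_k\le \frac{1}{L_k+q\rho}$. Then for every $j\ge 0$ the vector $p_{j+1}:=-\frac{1}{\alpha_j}(x_{j+1}-x_j)-g_j$ belongs to $\partial h(x_{j+1})$, and for all $k\ge0$, $$\sum_{j=0}^{k}\frac{\alpha_j}{2}\,\|g_j+p_{j+1}\|^2\le f(x_0)-f_\infty+\frac{\sum_{j=0}^{k}(2-q)\,\delta_j^{\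frac{2}{2-q}}}{2\rho^{\frac{q}{2-q}}}.$$
   Context: $\|\cdot\|$ is the Euclidean norm and $\partial h$ the (convex) subdifferential of $h$. The inequality required of $g_k$ says that $F$ is equipped at $x_k$ with an ''inexact first-order $(\delta_k,L_k)$-oracle of degree $q$''; the vector $g_k+p_{k+1}$ is called the gradient mapping at iteration $k$. *)

(* Defs.v *)
From HB Require Import structures.
From mathcomp Require Import all_boot all_order all_algebra.
From mathcomp Require Import all_classical all_reals all_analysis.
Set Implicit Arguments. Unset Strict Implicit. Unset Printing Implicit Defensive.
Import Order.TTheory GRing.Theory Num.Theory.
Local Open Scope ring_scope.

Section Defs.
Context {R : realType} {n : nat}.
Notation V := 'rV[R]_n.

Definition dotp (x y : V) : R := \sum_(i < n) x ord0 i * y ord0 i.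
Definition enorm (x : V) : R := Num.sqrt (dotp x x).

Definition dom (h : V -> \bar R) (x : V) : Prop := (h x < +oo)%E.

Definition proper_fun (h : V -> \bar R) : Prop :=
  (exists x, dom h x) /\ (forall x, h x != -oo%E).

(* closed = lower semicontinuous (epigraph closed), w.r.t. the Euclidean norm *)
Definition closed_fun (h : V -> \bar R) : Prop :=
  forall x (a : R), (a%:E < h x)%E ->
    exists2 d : R, 0 < d & forall y, enorm (y - x) < d -> (a%:E < h y)%E.

Definition convex_efun (h : V -> \bar R) : Prop :=
  forall x y (t : R), dom h x -> dom h y -> 0 < t < 1 ->
    (h (t *: x + (1 - t) *: y)%R <= t%:E * h x + (1 - t)%:E * h y)%E.

Definition lsc_fun (F : V -> R) : Prop :=
  forall x (e : R), 0 < e ->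
    exists2 d : R, 0 < d & forall y, enorm (y - x) < d -> F x - e < F y.

Definition subdiff (h : V -> \bar R) (x p : V) : Prop :=
  dom h x /\ forall y, (h x + (dotp p (y - x))%:E <= h y)%E.

Definition is_prox (gamma : R) (h : V -> \bar R) (z y : V) : Prop :=
  dom h y /\ forall y', dom h y' ->
    fine (h y) + (2 * gamma)^-1 * enorm (z - y) ^+ 2
      <= fine (h y') + (2 * gamma)^-1 * enorm (z - y') ^+ 2.

End Defs.

(* Main.v *)
Require Import Defs.
From HB Require Import structures.
From mathcomp Require Import all_boot all_order all_algebra.
From mathcomp Require Import all_classical all_reals all_analysis.
From mathcomp Require Import ring lra.
Import Order.TTheory GRing.Theory Num.Theory.
Local Open Scope ring_scope.

Section L.
Context {R : realType} {n : nat}.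
Notation V := 'rV[R]_n.
Implicit Types (x y z : V).

Lemma dotpDl x y z : dotp (x + y) z = dotp x z + dotp y z.
Proof. by rewrite /dotp -big_split; apply: eq_bigr => i _; rewrite mxE mulrDl. Qed.
Lemma dotpZl (a : R) x y : dotp (a *: x) y = a * dotp x y.
Proof. by rewrite /dotp mulr_sumr; apply: eq_bigr => i _; rewrite mxE mulrA. Qed.
Lemma dotpC x y : dotp x y = dotp y x.
Proof. by rewrite /dotp; apply: eq_bigr => i _; rewrite mulrC. Qed.
Lemma dotp_ge0 x : 0 <= dotp x x.
Proof. by apply: sumr_ge0 => i _; rewrite -expr2 sqr_ge0. Qed.
Lemma enorm_sq x : enorm x ^+ 2 = dotp x x.
Proof. by rewrite /enorm sqr_sqrtr // dotp_ge0. Qed.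
Lemma enorm_ge0 x : 0 <= enorm x.
Proof. exact: sqrtr_ge0. Qed.
Lemma dotp_exp x y (t : R) :
  dotp (x - t *: y) (x - t *: y) = dotp x x - 2 * t * dotp x y + t ^+ 2 * dotp y y.
Proof.
rewrite /dotp !mulr_sumr -sumrB -big_split /=; apply: eq_bigr => i _.
rewrite !mxE; ring.
Qed.
End L.

Section L2.
Context {R : realType}.

Lemma lim_le (a b c : R) : 0 <= c -> (forall t, 0 < t < 1 -> a <= b + t * c) -> a <= b.
Proof.
move=> c0 H; rewrite leNgt; apply/negP => ba.
have e0 : 0 < a - b by rewrite subr_gt0.
have D0 : 0 < a - b + c + 1 by lra.
set t := (a - b) / (a - b + c + 1).
have t0 : 0 < t by rewrite divr_gt0.
have t1 : t < 1 by rewrite ltr_pdivrMr // mul1r; lra.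
have := H t; rewrite t0 t1 => /(_ isT).
have : t * c < a - b.
  rewrite /t mulrAC ltr_pdivrMr //; nra.
lra.
Qed.

Lemma young (q rho d s : R) : 0 < q < 2 -> 0 < rho -> 0 <= d -> 0 <= s ->
  d * powR s q <= q * rho / 2 * s ^+ 2
     + (2 - q) * powR d (2 / (2 - q)) / (2 * powR rho (q / (2 - q))).
Proof.
move=> /andP[q0 q2] r0 d0 s0.
set c := powR rho (q / 2).
have c0 : 0 < c by rewrite powR_gt0.
have pq : (2 / q)^-1 + (2 / (2 - q))^-1 = 1.
  by rewrite !invf_div; field; lra.
have := @conjugate_powR _ (c * powR s q) (d / c) (2 / q) (2 / (2 - q))
  (mulr_ge0 (ltW c0) (powR_ge0 _ _)) (divr_ge0 d0 (ltW c0))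
  (divr_gt0 (ltr0Sn _ 1) q0) (divr_gt0 (ltr0Sn _ 1) (eqbRL (subr_gt0 _ _) q2)) pq.
have -> : c * powR s q * (d / c) = d * powR s q.
  by field; rewrite gt_eqF.
move/le_trans; apply; apply: lerD.
  rewrite (powRM _ (ltW c0) (powR_ge0 _ _)) -!powRrM.
  have -> : q / 2 * (2 / q) = 1 by field; lra.
  have -> : q * (2 / q) = 2%:R by field; lra.
  rewrite powRr1 ?(ltW r0) // powR_mulrn // invf_div.
  by rewrite (_ : rho * s ^+ 2 * (q / 2) = q * rho / 2 * s ^+ 2) //; ring.
have ci : 0 <= c^-1 by rewrite invr_ge0 ltW.
rewrite (powRM _ d0 ci) -(powR_inv1 (ltW c0)) -!powRrM.
have -> : q / 2 * (-1 * (2 / (2 - q))) = - (q / (2 - q)) by field; lra.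
rewrite powRN invf_div.
have rp : 0 < rho `^ (q / (2 - q)) by rewrite powR_gt0.
rewrite (_ : d `^ (2 / (2 - q)) / rho `^ (q / (2 - q)) * ((2 - q) / 2) =
  (2 - q) * d `^ (2 / (2 - q)) / (2 * rho `^ (q / (2 - q)))) //.
by field; rewrite gt_eqF.
Qed.
Lemma young' (q rho d s : R) : 0 <= q < 2 -> 0 < rho -> 0 <= d -> 0 <= s ->
  d * powR s q <= q * rho / 2 * s ^+ 2
     + (2 - q) * powR d (2 / (2 - q)) / (2 * powR rho (q / (2 - q))).
Proof.
move=> /andP[]; rewrite le_eqVlt => /orP[/eqP <-|q0] q2 r0 d0 s0.
  rewrite !powRr0 !mul0r subr0 ?mul0r !powRr0 ?add0r ?mul0r ?add0r divff ?powRr1 //.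
  by rewrite mulr1 mulr1 mulrAC divff ?mul1r // pnatr_eq0.
by apply: (young q rho d s) => //; rewrite q0 q2.
Qed.
End L2.

Theorem theorem1 (R : realType) (n : nat)
    (F : 'rV[R]_n -> R) (h : 'rV[R]_n -> \bar R) (finf : R)
    (q rho : R) (x g : nat -> 'rV[R]_n) (delta L alpha : nat -> R) :
  proper_fun h -> closed_fun h -> convex_efun h -> lsc_fun F ->
  (forall y, dom h y -> (finf%:E <= (F y)%:E + h y)%E) ->
  0 <= q < 2 -> 0 < rho ->
  dom h (x 0%N) ->
  (forall k, is_prox (alpha k) h (x k - alpha k *: g k) (x k.+1)) ->
  (forall k, 0 <= delta k) -> (forall k, 0 < L k) ->
  (forall k y, dom h y ->
     F y - (F (x k) + dotp (g k) (y - x k))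
       <= L k / 2 * enorm (y - x k) ^+ 2 + delta k * powR (enorm (y - x k)) q) ->
  (forall k, 0 < alpha k <= (L k + q * rho)^-1) ->
  let p := fun j => - ((alpha j)^-1 *: (x j.+1 - x j)) - g j in
  (forall j, subdiff h (x j.+1) (p j)) /\
  (forall k, \sum_(j < k.+1) (alpha j / 2 * enorm (g j + p j) ^+ 2)
     <= F (x 0%N) + fine (h (x 0%N)) - finf
        + (\sum_(j < k.+1) (2 - q) * powR (delta j) (2 / (2 - q)))
          / (2 * powR rho (q / (2 - q)))).

Proof.
move=> [hex hnoo] _ hconv _ hinf /andP[q0 q2] r0 dom0 hprox d0 L0 hF halpha p.
have domx : forall j, dom h (x j) by case=> [|j] //; case: (hprox j).
have fin : forall y, dom h y -> h y = (fine (h y))%:E.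
  by move=> y dy; rewrite fineK // fin_numE hnoo (lt_eqF dy).
have a0 : forall j, 0 < alpha j by move=> j; case/andP: (halpha j).
have sub : forall j, subdiff h (x j.+1) (p j).
  move=> j; split; first exact: domx.
  move=> y; case: (boolP (h y < +oo)%E) => [dy|]; last first.
    by rewrite ltey negbK => /eqP ->; exact: leey.
  set a := alpha j; set z := x j - a *: g j; set xp := x j.+1.
  have pE : p j = a^-1 *: (z - xp).
    apply/rowP => i; rewrite /p /z /a /xp !mxE; field; rewrite gt_eqF // a0.
  rewrite (fin _ (domx j.+1)) (fin _ dy) -EFinD lee_fin pE dotpZl.
  set hx := fine (h xp); set hy := fine (h y).
  apply: (@lim_le _ _ _ ((2 * a)^-1 * dotp (y - xp) (y - xp))).
    by rewrite mulr_ge0 ?dotp_ge0 // invr_ge0 mulr_ge0 // ltW // a0.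
  move=> t /andP[t0 t1].
  have cv := hconv y xp t dy (domx j.+1) (introT andP (conj t0 t1)).
  rewrite (fin _ dy) (fin _ (domx j.+1)) -!EFinM -EFinD in cv.
  have dyt : dom h (t *: y + (1 - t) *: xp) by apply: le_lt_trans cv (ltry _).
  rewrite (fin _ dyt) lee_fin in cv.
  have pr := (hprox j).2 _ dyt.
  rewrite -/z -/xp (_ : z - (t *: y + (1 - t) *: xp) = (z - xp) - t *: (y - xp)) in pr;
    last by apply/rowP => i; rewrite !mxE; ring.
  rewrite !enorm_sq dotp_exp -/hx in pr.
  set W := dotp (z - xp) (z - xp) in pr *.
  set X := dotp (z - xp) (y - xp) in pr *.
  set Vv := dotp (y - xp) (y - xp) in pr *.
  set FY := fine _ in pr cv.
  have ia : (2 * a)^-1 = a^-1 / 2 by rewrite invfM mulrC.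
  rewrite ia in pr *.
  have : t * (hx + a^-1 * X - (hy + t * (a^-1 / 2 * Vv))) <= 0.
    rewrite -/hy -/xp -/hx in cv; lra.
  by rewrite pmulr_rle0 // subr_le0.
split => //.
pose f j := F (x j) + fine (h (x j)).
pose C := 2 * powR rho (q / (2 - q)).
have step : forall j, alpha j / 2 * enorm (g j + p j) ^+ 2 <=
    f j - f j.+1 + (2 - q) * powR (delta j) (2 / (2 - q)) / C.
  move=> j; set a := alpha j; set dd := x j.+1 - x j.
  have uE : g j + p j = - (a^-1 *: dd).
    by apply/rowP => i; rewrite /p /dd /a !mxE; ring.
  have hFj := hF j _ (domx j.+1).
  have sj := (sub j).2 (x j).
  rewrite (fin _ (domx j.+1)) (fin _ (domx j)) -EFinD lee_fin in sj.
  have yo := young' q rho (delta j) (enorm (x j.+1 - x j)) (introT andP (conj q0 q2)) r0 (d0 j) (enorm_ge0 _).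
  rewrite -/dd in hFj yo; rewrite enorm_sq in hFj yo.
  rewrite uE enorm_sq.
  have e1 : dotp (- (a^-1 *: dd)) (- (a^-1 *: dd)) = a^-1 * a^-1 * dotp dd dd.
    by rewrite /dotp !mulr_sumr; apply: eq_bigr => i _; rewrite !mxE; ring.
  have e2 : dotp (p j) (x j - x j.+1) = - dotp (p j) dd.
    by rewrite /dotp -sumrN; apply: eq_bigr => i _; rewrite /dd !mxE; ring.
  have e3 : dotp (g j) dd + dotp (p j) dd = - (a^-1 * dotp dd dd).
    by rewrite -dotpDl uE /dotp mulr_sumr -sumrN; apply: eq_bigr => i _; rewrite !mxE; ring.
  rewrite e1; rewrite e2 in sj.
  set D := dotp dd dd in hFj yo e1 e3 *.
  have D0 : 0 <= D by exact: dotp_ge0.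
  have [aj aM] := andP (halpha j).
  set M := L j + q * rho in aM.
  have M0 : 0 < M.
    have := L0 j; have : 0 <= q * rho by rewrite mulr_ge0 // ltW.
    rewrite /M; lra.
  have aM1 : a * M <= 1 by rewrite -ler_pdivlMr // mul1r.
  have MD : M * D <= a^-1 * D.
    rewrite -subr_ge0 (_ : a^-1 * D - M * D = (1 - a * M) * (a^-1 * D)).
      by rewrite mulr_ge0 ?subr_ge0 // mulr_ge0 // invr_ge0 ltW.
    by field; rewrite gt_eqF.
  have e4 : a / 2 * (a^-1 * a^-1 * D) = a^-1 / 2 * D by field; rewrite gt_eqF.
  rewrite e4 /f /M.
  rewrite /M in MD.
  rewrite /C; lra.
have tel : forall k, \sum_(j < k) (alpha j / 2 * enorm (g j + p j) ^+ 2) <=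
    f 0%N - f k + \sum_(j < k) ((2 - q) * powR (delta j) (2 / (2 - q)) / C).
  elim=> [|k IH]; first by rewrite !big_ord0 subrr addr0.
  rewrite !big_ord_recr /=; have := step k; lra.
move=> k; apply: le_trans (tel k.+1) _.
rewrite -mulr_suml -/C.
have := hinf _ (domx k.+1); rewrite (fin _ (domx k.+1)) -EFinD lee_fin.
rewrite /f; lra.
Qed.
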